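(* The categories $\mathcal{VAR}$ and $\mathcal{MCA}$ are isomorphic. On objects, the isomorphism sends a variety $\mathcal V$ of $\tau$-algebras to the clone $\mathcal V$-algebra $\mathbf{Cl}(\mathcal V)$, with inverse sending a minimal clone $\tau$-algebra $\mathbf C=(\mathbf C_\tau,q_n^{\mathbf C},\mathsf e_i^{\mathbf C})$ to the variety $\mathrm{Var}(\mathbf C_\tau)$ generated by its $\tau$-reduct; one has $\mathcal V=\mathrm{Var}(\mathbf{Cl}(\mathcal V)_\tau)$ and $\mathbf C\cong\mathbf{Cl}(\mathrm{Var}(\mathbf C_\tau))$. Moreover, for varieties $\mathcal V,\mathcal W$ there is a bijective correspondence between the set $\mathrm{Hom}_{\mathcal{VAR}}(\mathcal V,\mathcal W)$ of interpretations of $\mathcal V$ into $\mathcal W$ and the set of pure homomorphisms from $\mathbf{Cl}(\mathcal V)$ to $\mathbf{Cl}(\mathcal W)$.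
   Context: A clone $\tau$-algebra is an algebra $\mathbf C=(C,\sigma^{\mathbf C}\ (\sigma\in\tau),q_n^{\mathbf C}\ (n\ge0),\mathsf e_i^{\mathbf C}\ (i\ge1))$ with $\mathsf e_i$ nullary, $q_n$ of arity $n+1$, satisfying: (C1) $q_n(\mathsf e_i,x_1,\dots,x_n)=x_i$ ($1\le i\le n$); (C2) $q_n(\mathsf e_j,x_1,\dots,x_n)=\mathsf e_j$ ($j>n$); (C3) $q_n(x,\mathsf e_1,\dots,\mathsf e_n)=x$; (C4) $q_k(x,y_1,\dots,y_k)=q_n(x,y_1,\dots,y_k,\mathsf e_{k+1},\dots,\mathsf e_n)$ ($n>k$); (C5) $q_n(q_n(x,\mathbf y),\mathbf z)=q_n(x,q_n(y_1,\mathbf z),\dots,q_n(y_n,\mathbf z))$; (C6) $q_n(\sigma(x_1,\dots,x_k),\mathbf y)=\sigma(q_n(x_1,\mathbf y),\dots,q_n(x_k,\mathbf y))$ for $\sigma\in\tau$ of arity $k$. It is minimal if $C$ is the smallest subset containing all $\mathsf e_i^{\mathbf C}$ and closed under all $\sigma^{\mathbf C}$. A pure homomorphism between clone algebras (possibly of different types) is a map preserving all $\mathsf e_i$ and all $q_n$. $\mathcal{MCA}$ is the category whose objects are minimal clone algebras of arbitrary types and whose arrows are pure homomorphisms. For a variety $\mathcal V$ of $\tau$-algebras with free algebra $\mathbf F_{\mathcal V}$ over $\{v_1,v_2,\dots\}$, $\mathbf{Cl}(\mathcal V)=(\mathbf F_{\mathcal V},q_n^{\mathbf F},\mathsf e_i^{\mathbf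 F})$ with $\mathsf e_i^{\mathbf F}=v_i$ and $q_n^{\mathbf F}(a,b_1,\dots,b_n)=s(a)$, $s$ the unique endomorphism with $s(v_i)=b_i$ ($i\le n$), $s(v_i)=v_i$ ($i>n$). An interpretation of a variety $\mathcal V$ of type $\tau$ into a variety $\mathcal W$ of type $\nu$ is a map $f$ on $\tau$ such that: for $\sigma\in\tau$ of arity $n>0$, $f(\sigma)$ is a $\nu$-term in the variables $v_1,\dots,v_n$; for nullary $\sigma$, $f(\sigma)$ is a $\nu$-term $t(v_1)$ with $\mathcal W\models t(v_1)=t(v_2)$; and for every $\mathbf A\in\mathcal W$, the $\tau$-algebra $\mathbf A^f$ on $A$ interpreting each $\sigma$ as the term operation of $f(\sigma)$ in $\mathbf A$ belongs to $\mathcal V$. $\mathcal{VAR}$ is the category whose objects are varieties of algebras (of arbitrary types) and whose arrows are interpretations (composed by substituting terms for operation symbols). *)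

(* Defs.v *)
From mathcomp Require Import all_boot.
From Stdlib Require Import ClassicalEpsilon.
Set Implicit Arguments. Unset Strict Implicit. Unset Printing Implicit Defensive.

(* Conventions: variables and projections are indexed from 0:
   Var i / ca_e i stand for v_(i+1) / e_(i+1) of the paper, and
   q_n takes its n extra arguments as a function 'I_n -> C. *)

Record signature := Sig { op :> Type; arity : op -> nat }.

Inductive term (s : signature) : Type :=
| Var : nat -> term s
| App : forall o : s, ('I_(arity o) -> term s) -> term s.
Arguments Var {s} _.
Arguments App {s} o _.

Definition tup_ext (A : Type) (n : nat) (y : 'I_n -> A) (d : nat -> A) : nat -> A :=
  fun i => if (insub i : option 'I_n) is Some j then y j else d i.

Fixpoint subst s (sg : nat -> term s) (t : term s) : term s :=
  match t with
  | Var i => sg i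
  | App o ts => App o (fun j => @subst s sg (ts j))
  end.

Fixpoint vars_below s (n : nat) (t : term s) : Prop :=
  match t with
  | Var i => i < n
  | App o ts => forall j, @vars_below s n (ts j)
  end.

Record algebra (s : signature) := Alg {
  carrier :> Type;
  interp : forall o : s, ('I_(arity o) -> carrier) -> carrier;
  alg_nonempty : inhabited carrier }.
Arguments interp {s} a o _.

Fixpoint eval s (A : algebra s) (v : nat -> A) (t : term s) : A :=
  match t with
  | Var i => v i
  | App o ts => interp A o (fun j => @eval s A v (ts j))
  end.
Arguments eval {s} A v t.

Definition satisfies s (A : algebra s) (t u : term s) : Prop :=
  forall v : nat -> A, eval A v t = eval A v u.

Definition Mod s (E : term s -> term s -> Prop) : algebra s -> Prop :=
  fun A => forall t u, E t u -> satisfies A t u.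

Definition is_variety s (K : algebra s -> Prop) : Prop :=
  exists E : term s -> term s -> Prop, forall A, K A <-> Mod E A.

Record variety (s : signature) := Variety {
  vclass :> algebra s -> Prop;
  vclass_variety : is_variety vclass }.

Definition veq s (V : algebra s -> Prop) (t u : term s) : Prop :=
  forall A, V A -> satisfies A t u.

(* Var(A): the variety generated by A, i.e. the models of all identities of A *)
Definition Id s (A : algebra s) : term s -> term s -> Prop := fun t u => satisfies A t u.

Lemma VarOf_variety s (A : algebra s) : is_variety (Mod (Id A)).
Proof. by exists (Id A). Qed.

Definition VarOf s (A : algebra s) : variety s := Variety (VarOf_variety A).

Record clone_algebra (s : signature) := CloneAlg {
  ca_alg :> algebra s;
  ca_q : forall n : nat, ca_alg -> ('I_n -> ca_alg) -> ca_alg;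
  ca_e : nat -> ca_alg }.
Arguments ca_q {s} c n _ _.
Arguments ca_e {s} c _.

Definition clone_axioms s (C : clone_algebra s) : Prop :=
  let q := ca_q C in let e := ca_e C in
  (forall n (i : 'I_n) y, q n (e i) y = y i) /\
  (forall n j y, n <= j -> q n (e j) y = e j) /\
  (forall n x, q n x (fun i : 'I_n => e i) = x) /\
  (forall k n x (y : 'I_k -> C), k < n ->
                 q k x y = q n x (fun i : 'I_n => tup_ext y e i)) /\
  (forall n x (y z : 'I_n -> C),
                 q n (q n x y) z = q n x (fun i => q n (y i) z)) /\
  ( forall n (o : s) (xs : 'I_(arity o) -> C) (y : 'I_n -> C),
                 q n (interp C o xs) y = interp C o (fun j => q n (xs j) y)).

Definition minimal s (C : clone_algebra s) : Prop :=
  forall P : C -> Prop,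
    (forall i, P (ca_e C i)) ->
    (forall (o : s) (xs : 'I_(arity o) -> C), (forall j, P (xs j)) -> P (interp C o xs)) ->
    forall x, P x.

Definition is_pure_hom s s' (C : clone_algebra s) (D : clone_algebra s') (h : C -> D) : Prop :=
  (forall i, h (ca_e C i) = ca_e D i) /\
  (forall n (x : C) (y : 'I_n -> C), h (ca_q C n x y) = ca_q D n (h x) (fun i => h (y i))).

Definition clone_iso s (C D : clone_algebra s) (h : C -> D) : Prop :=
  [/\ bijective h,
      forall (o : s) (xs : 'I_(arity o) -> C), h (interp C o xs) = interp D o (fun j => h (xs j))
    & is_pure_hom h].

Definition FV s (V : variety s) : Type := {c : term s -> Prop | exists t, c = veq V t}.

Definition cls s (V : variety s) (t : term s) : FV V := exist _ (veq V t) (ex_intro _ t erefl).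

Definition rep s (V : variety s) (c : FV V) : term s :=
  proj1_sig (constructive_indefinite_description _ (proj2_sig c)).

Definition FAlg s (V : variety s) : algebra s :=
  @Alg s (FV V) (fun o xs => cls V (App o (fun j => rep (xs j)))) (inhabits (cls V (Var 0))).

Definition Cl s (V : variety s) : clone_algebra s :=
  @CloneAlg s (FAlg V)
    (fun n a b => cls V (subst (tup_ext (fun j => rep (b j)) Var) (rep a)))
    (fun i => cls V (Var i)).

Fixpoint translate (s s' : signature) (f : forall o : s, term s') (t : term s) : term s' :=
  match t with
  | Var i => Var i
  | App o ts => subst (tup_ext (fun j => @translate s s' f (ts j)) Var) (f o)
  end.

Definition dflt s (A : algebra s) : A := epsilon (alg_nonempty A) (fun _ => True).

Definition reduct (s s' : signature) (f : forall o : s, term s') (A : algebra s') : algebra s :=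
  @Alg s A (fun o xs => eval A (tup_ext xs (fun _ => dflt A)) (f o)) (alg_nonempty A).

Definition is_interp s s' (V : variety s) (W : variety s') (f : forall o : s, term s') : Prop :=
  [/\ forall o : s, 0 < arity o -> vars_below (arity o) (f o),
      forall o : s, arity o = 0 ->
        vars_below 1 (f o) /\ veq W (f o) (subst (fun _ => Var 1) (f o))
    & forall A, W A -> V (reduct f A)].

Definition interp_equiv s s' (W : variety s') (f g : forall o : s, term s') : Prop :=
  forall o, veq W (f o) (g o).

Definition id_interp (s : signature) : forall o : s, term s :=
  fun o => App o (fun j => Var j).

Definition comp_interp (s s' s'' : signature) (g : forall o : s', term s'')
  (f : forall o : s, term s') : forall o : s, term s'' :=
  fun o => translate g (f o).

(* Main.v *)
Require Import Defs.
From mathcomp Require Import all_boot.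
From Stdlib Require Import FunctionalExtensionality ProofIrrelevance PropExtensionality ClassicalEpsilon.
Set Implicit Arguments. Unset Strict Implicit. Unset Printing Implicit Defensive.

Lemma tup_ext_lt (A : Type) n (y : 'I_n -> A) d (j : 'I_n) : tup_ext y d j = y j.
Proof. rewrite /tup_ext; case: insubP => [k _ /val_inj -> //|]; by rewrite /= ltn_ord. Qed.

Lemma tup_ext_ge (A : Type) n (y : 'I_n -> A) d i : n <= i -> tup_ext y d i = d i.
Proof. move=> hle; rewrite /tup_ext; case: insubP => [k _ Hk|//]; by rewrite -Hk leqNgt ltn_ord in hle. Qed.

Lemma tup_ext_map (A B : Type) n (y : 'I_n -> A) d (F : A -> B) i :
  F (tup_ext y d i) = tup_ext (fun j => F (y j)) (fun i => F (d i)) i.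
Proof. by rewrite /tup_ext; case: insubP. Qed.

Lemma eval_subst s (A : algebra s) v sg t :
  eval A v (subst sg t) = eval A (fun i => eval A v (sg i)) t.
Proof.
elim: t => [i|o ts IH] //=; congr (interp A o _); apply: functional_extensionality => j; exact: IH.
Qed.

Lemma eval_ext s (A : algebra s) v w t : (forall i, v i = w i) -> eval A v t = eval A w t.
Proof. by move=> /functional_extensionality ->. Qed.

Lemma subst_ext s (sg sg' : nat -> term s) t : (forall i, sg i = sg' i) -> subst sg t = subst sg' t.
Proof. by move=> /functional_extensionality ->. Qed.

Lemma subst_comp s (s1 s2 : nat -> term s) t :
  subst s2 (subst s1 t) = subst (fun i => subst s2 (s1 i)) t.
Proof.
elim: t => [i|o ts IH] //=; congr (App o _); apply: functional_extensionality => j; exact: IH.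
Qed.

Lemma subst_var s (sg : nat -> term s) t : (forall i, sg i = Var i) -> subst sg t = t.
Proof.
move=> H; elim: t => [i|o ts IH] //=; congr (App o _); apply: functional_extensionality => j; exact: IH.
Qed.

Lemma vars_below_mono s m n (t : term s) : m <= n -> vars_below m t -> vars_below n t.
Proof. move=> lmn; elim: t => [i|o ts IH] /=; [move=> H; exact: leq_trans H lmn | move=> H j; exact: IH]. Qed.

Fixpoint bound s (t : term s) : nat :=
  match t with Var i => i.+1 | App o ts => \max_(j < arity o) bound (ts j) end.

Lemma vars_bound s (t : term s) : vars_below (bound t) t.
Proof.
elim: t => [i|o ts IH] //= j; apply: vars_below_mono (IH j).
exact: (@leq_bigmax _ (fun j => bound (ts j)) j).
Qed.

Lemma vars_below_subst s m (sg : nat -> term s) t :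
  (forall i, vars_below m (sg i)) -> vars_below m (subst sg t).
Proof. move=> H; elim: t => [i|o ts IH] //=. Qed.

Lemma subst_agree s n (sg sg' : nat -> term s) t :
  vars_below n t -> (forall i, i < n -> sg i = sg' i) -> subst sg t = subst sg' t.
Proof.
move=> + H; elim: t => [i|o ts IH] /=; first exact: H.
move=> Hv; congr (App o _); apply: functional_extensionality => j; exact: IH.
Qed.

Lemma eval_agree s (A : algebra s) n v w t :
  vars_below n t -> (forall i, i < n -> v i = w i) -> eval A v t = eval A w t.
Proof.
move=> + H; elim: t => [i|o ts IH] /=; first exact: H.
move=> Hv; congr (interp A o _); apply: functional_extensionality => j; exact: IH.
Qed.

Section Var.
Variables (s : signature) (V : variety s).

Lemma veq_refl t : veq V t t. Proof. by []. Qed.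
Lemma veq_sym t u : veq V t u -> veq V u t. Proof. by move=> H A HA v; rewrite H. Qed.
Lemma veq_trans t u w : veq V t u -> veq V u w -> veq V t w.
Proof. by move=> H1 H2 A HA v; rewrite H1 // H2. Qed.

Lemma veq_App o (ts us : 'I_(arity o) -> term s) :
  (forall j, veq V (ts j) (us j)) -> veq V (App o ts) (App o us).
Proof.
move=> H A HA v /=; congr (interp A o _); apply: functional_extensionality => j; exact: H.
Qed.

Lemma veq_subst t u (sg sg' : nat -> term s) :
  veq V t u -> (forall i, veq V (sg i) (sg' i)) -> veq V (subst sg t) (subst sg' u).
Proof.
move=> Htu Hs A HA v; rewrite !eval_subst.
rewrite (@eval_ext _ _ _ (fun i => eval A v (sg' i))); first exact: Htu.
by move=> i; apply: Hs.
Qed.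

Lemma exist_irr (T : Type) (P : T -> Prop) x y (p : P x) (q : P y) :
  x = y -> exist P x p = exist P y q.
Proof. move=> E; subst y; f_equal; apply: proof_irrelevance. Qed.

Lemma cls_eq t u : cls V t = cls V u <-> veq V t u.
Proof.
split.
- move=> /(congr1 (@proj1_sig _ _)) /= E; rewrite E; exact: veq_refl.
- move=> H; apply: exist_irr; apply: functional_extensionality => w.
  apply: propositional_extensionality; split => Hw.
  + exact: veq_trans (veq_sym H) Hw.
  + exact: veq_trans H Hw.
Qed.

Lemma rep_spec (c : FV V) : proj1_sig c = veq V (rep c).
Proof. rewrite /rep; case: constructive_indefinite_description => /= t Ht; exact: Ht. Qed.

Lemma cls_rep (c : FV V) : cls V (rep c) = c.
Proof.
case: c => p Hp; rewrite /cls; apply: exist_irr; symmetry; exact: (rep_spec (exist _ p Hp)).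
Qed.

Lemma rep_cls t : veq V (rep (cls V t)) t.
Proof. rewrite -rep_spec /=; exact: veq_refl. Qed.

Lemma cls_surj (c : FV V) : exists t, c = cls V t.
Proof. by exists (rep c); rewrite cls_rep. Qed.

Lemma fun_surj (I : Type) (y : I -> FV V) : exists bs, y = fun i => cls V (bs i).
Proof.
exists (fun i => rep (y i)); apply: functional_extensionality => i; by rewrite cls_rep.
Qed.

Lemma interp_cls o (ts : 'I_(arity o) -> term s) :
  interp (FAlg V) o (fun j => cls V (ts j)) = cls V (App o ts).
Proof. apply/cls_eq; apply: veq_App => j; exact: rep_cls. Qed.

Lemma q_cls n a (bs : 'I_n -> term s) :
  ca_q (Cl V) n (cls V a) (fun i => cls V (bs i)) = cls V (subst (tup_ext bs Var) a).
Proof.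
apply/cls_eq; apply: veq_subst; first exact: rep_cls.
move=> i; rewrite /tup_ext; case: insubP => [j _ _|_] /=; [exact: rep_cls | exact: veq_refl].
Qed.

Lemma eval_F t : eval (FAlg V) (fun i => cls V (Var i)) t = cls V t.
Proof.
elim: t => [i|o ts IH] //=; apply/cls_eq; apply: veq_App => j; rewrite IH; exact: rep_cls.
Qed.

Lemma eval_F_gen v t : eval (FAlg V) v t = cls V (subst (fun i => rep (v i)) t).
Proof.
elim: t => [i|o ts IH] /=; first by rewrite cls_rep.
apply/cls_eq; apply: veq_App => j; rewrite IH; exact: rep_cls.
Qed.

Lemma sat_F t u : satisfies (FAlg V) t u <-> veq V t u.
Proof.
split.
- move=> H; have := H (fun i => cls V (Var i)); rewrite !eval_F; by move/cls_eq.
- move=> H v; rewrite !eval_F_gen; apply/cls_eq; apply: veq_subst => // i; exact: veq_refl.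
Qed.

Lemma part1 : clone_axioms (Cl V) /\ minimal (Cl V) /\
      (forall A : algebra s, VarOf (Cl V) A <-> V A).
Proof.
split; [|split].
- rewrite /clone_axioms; split; [|split; [|split; [|split; [|split]]]].
  + move=> n i y; case: (fun_surj y) => bs ->.
    by rewrite (q_cls (Var i) bs) /= tup_ext_lt.
  + move=> n j y H; case: (fun_surj y) => bs ->.
    by rewrite (q_cls (Var j) bs) /= tup_ext_ge.
  + move=> n x; case: (cls_surj x) => a ->.
    rewrite (q_cls a (fun i => Var i)) subst_var // => i.
    rewrite /tup_ext; by case: insubP => [j _ ->|].
  + move=> k n x y Hkn; case: (cls_surj x) => a ->; case: (fun_surj y) => bs ->.
    rewrite q_cls.
    have -> : (fun i : 'I_n => tup_ext (fun i0 => cls V (bs i0)) (ca_e (Cl V)) i)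
       = (fun i : 'I_n => cls V (tup_ext bs Var i)).
      by apply: functional_extensionality => i; rewrite (tup_ext_map bs Var (cls V)).
    rewrite q_cls; congr (cls V _); apply: subst_ext => i.
    case: (ltnP i n) => Hi.
    * by rewrite (tup_ext_lt _ _ (Ordinal Hi)).
    * rewrite !tup_ext_ge //; exact: leq_trans (ltnW Hkn) Hi.
  + move=> n x y z; case: (cls_surj x) => a ->; case: (fun_surj y) => bs ->.
    case: (fun_surj z) => cs ->.
    have -> : (fun i => ca_q (Cl V) n (cls V (bs i)) (fun i => cls V (cs i)))
       = (fun i => cls V (subst (tup_ext cs Var) (bs i))).
      by apply: functional_extensionality => j; rewrite q_cls.
    rewrite !q_cls subst_comp.
    congr (cls V _); apply: subst_ext => i.
    case: (ltnP i n) => Hi.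
    * by rewrite !(tup_ext_lt _ _ (Ordinal Hi)).
    * rewrite (tup_ext_ge _ _ Hi) /= [RHS]/tup_ext; case: insubP => [j _ E|_]; [by rewrite -E leqNgt ltn_ord in Hi | exact: tup_ext_ge].
  + move=> n o xs y; case: (fun_surj xs) => as_ ->; case: (fun_surj y) => bs ->.
    rewrite interp_cls q_cls.
    have -> : (fun j => ca_q (Cl V) n (cls V (as_ j)) (fun i => cls V (bs i)))
       = (fun j => cls V (subst (tup_ext bs Var) (as_ j))).
      by apply: functional_extensionality => j; rewrite q_cls.
    by rewrite interp_cls.
- move=> P Hi Ho x; case: (cls_surj x) => t ->.
  elim: t => [i|o ts IH]; first exact: Hi.
  rewrite -interp_cls; exact: Ho.
- move=> A; case: (vclass_variety V) => E HE; split.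
  + move=> HA; apply/HE => t u Etu; apply: HA; apply/sat_F => B HB.
    by move/HE: HB; apply.
  + move=> HA t u /sat_F H; exact: H.
Qed.

End Var.

Definition icond1 (s s' : signature) (f : forall o : s, term s') :=
  forall o : s, 0 < arity o -> vars_below (arity o) (f o).
Definition icond2 (s s' : signature) (W : variety s') (f : forall o : s, term s') :=
  forall o : s, arity o = 0 ->
        vars_below 1 (f o) /\ veq W (f o) (subst (fun _ => Var 1) (f o)).

Lemma const_indep s (W : variety s) (A : algebra s) t :
  W A -> vars_below 1 t -> veq W t (subst (fun _ => Var 1) t) ->
  forall w1 w2, eval A w1 t = eval A w2 t.
Proof.
move=> HA Hv Ht.
have Hc : forall a b : A, eval A (fun _ => a) t = eval A (fun _ => b) t.
  move=> a b.
  have -> : eval A (fun _ => b) t = eval A (fun i => if i == 1 then a else b) t.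
    by apply: (eval_agree Hv) => i; rewrite ltnS leqn0 => /eqP ->.
  by rewrite [RHS]Ht // eval_subst.
have Hw : forall w, eval A w t = eval A (fun _ => w 0) t.
  move=> w; apply: (eval_agree Hv) => i; by rewrite ltnS leqn0 => /eqP ->.
by move=> w1 w2; rewrite Hw (Hw w2) (Hc _ (w2 0)).
Qed.

Lemma eval_translate (s s' : signature) (W : variety s') (f : forall o : s, term s') (A : algebra s') :
  icond1 f -> icond2 W f -> W A ->
  forall v t, eval A v (translate f t) = eval (reduct f A) v t.
Proof.
move=> H1 H2 HA v; elim=> [i|o ts IH] //=.
rewrite eval_subst.
have E : forall i, eval A v (tup_ext (fun j => translate f (ts j)) Var i)
     = tup_ext (fun j => eval (reduct f A) v (ts j)) v i.
  move=> i; rewrite (tup_ext_map _ _ (eval A v)) /=; rewrite /tup_ext.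
  by case: insubP => [j _ _|_] //=; rewrite IH.
rewrite (eval_ext _ E).
case: (posnP (arity o)) => Ho.
- case: (H2 o Ho) => Hv Hid; exact: (const_indep HA Hv Hid).
- apply: (eval_agree (H1 o Ho)) => i Hi.
  by rewrite (tup_ext_lt _ _ (Ordinal Hi)) (tup_ext_lt _ _ (Ordinal Hi)).
Qed.

Definition Phi (s s' : signature) (V : variety s) (W : variety s')
  (f : forall o : s, term s') (c : Cl V) : Cl W := cls W (translate f (rep c)).
Arguments Phi : clear implicits.

Section P3.
Variables (s s' : signature) (V : variety s) (W : variety s').

Lemma translate_veq (f : forall o : s, term s') t u :
  is_interp V W f -> veq V t u -> veq W (translate f t) (translate f u).
Proof.
case=> H1 H2 H3 Htu A HA v; rewrite !(eval_translate H1 H2 HA); exact: Htu (H3 _ HA) v.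
Qed.

Lemma translate_subst (f : forall o : s, term s') sg t :
  icond1 f -> icond2 W f ->
  veq W (translate f (subst sg t)) (subst (fun i => translate f (sg i)) (translate f t)).
Proof.
move=> H1 H2 A HA v; rewrite eval_subst !(eval_translate H1 H2 HA) eval_subst.
apply: (@eval_ext _ (reduct f A)) => i.
by rewrite (eval_translate H1 H2 HA).
Qed.


Lemma Phi_cls f t : is_interp V W f -> Phi s s' V W f (cls V t) = cls W (translate f t).
Proof. move=> Hf; apply/cls_eq; apply: translate_veq Hf _; exact: rep_cls. Qed.

Lemma Phi_pure f : is_interp V W f -> is_pure_hom (Phi s s' V W f).
Proof.
move=> Hf; have [H1 H2 _] := Hf; split.
- move=> i; exact: (Phi_cls (Var i) Hf).
- move=> n x y; case: (cls_surj x) => a ->; case: (fun_surj y) => bs ->.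
  rewrite q_cls Phi_cls //.
  have -> : (fun i => Phi s s' V W f (cls V (bs i))) = (fun i => cls W (translate f (bs i))).
    by apply: functional_extensionality => i; rewrite Phi_cls.
  rewrite Phi_cls // q_cls; apply/cls_eq.
  apply: veq_trans (translate_subst _ _ H1 H2) _.
  rewrite (@subst_ext _ (fun i => translate f (tup_ext bs Var i)) (tup_ext (fun j => translate f (bs j)) Var)).
    exact: veq_refl.
  by move=> i; rewrite (tup_ext_map _ _ (translate f)).
Qed.

Lemma translate_App_var (f : forall o : s, term s') o :
  translate f (App o (fun j => Var j)) = f o.
Proof.
rewrite /= subst_var // => i; rewrite /tup_ext; by case: insubP => [j _ ->|].
Qed.

Lemma reduct_equiv (f g : forall o : s, term s') (A : algebra s') :
  interp_equiv W f g -> W A -> forall v t, eval (reduct f A) v t = eval (reduct g A) v t.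
Proof.
move=> Hfg HA v; elim=> [i|o ts IH] //=.
have -> : (fun j => eval (reduct f A) v (ts j)) = (fun j => eval (reduct g A) v (ts j)).
  by apply: functional_extensionality => j; rewrite IH.
exact: Hfg.
Qed.

Lemma Phi_inj f g : is_interp V W f -> is_interp V W g ->
  (Phi s s' V W f = Phi s s' V W g <-> interp_equiv W f g).
Proof.
move=> Hf Hg; split.
- move=> E o; have := congr1 (fun F => F (cls V (App o (fun j => Var j)))) E.
  by rewrite /= !Phi_cls // !translate_App_var => /cls_eq.
- move=> Hfg; apply: functional_extensionality => c; rewrite /Phi; apply/cls_eq.
  have [H1 H2 _] := Hf; have [G1 G2 _] := Hg.
  move=> A HA v; rewrite (eval_translate H1 H2 HA) (eval_translate G1 G2 HA).
  exact: reduct_equiv.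
Qed.

Lemma translate_id_interp (U : signature) (t : term U) : translate (@id_interp U) t = t.
Proof.
elim: t => [i|o ts IH] //=; congr (App o _); apply: functional_extensionality => j.
by rewrite tup_ext_lt IH.
Qed.

End P3.

Lemma Phi_id s (V : variety s) : Phi s s V V (@id_interp s) = id.
Proof.
apply: functional_extensionality => c; by rewrite /Phi translate_id_interp cls_rep.
Qed.

Lemma Phi_comp s s' s'' (V : variety s) (W : variety s') (U : variety s'') f g :
  is_interp V W f -> is_interp W U g ->
  Phi s s'' V U (comp_interp g f) = Phi s' s'' W U g \o Phi s s' V W f.
Proof.
move=> Hf Hg; have [G1 G2 _] := Hg.
apply: functional_extensionality => c; rewrite /= /Phi.
apply/cls_eq; apply: veq_trans; last first.
  apply: veq_sym; apply: translate_veq Hg _; exact: rep_cls.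
elim: (rep c) => [i|o ts IH] /=; first exact: veq_refl.
apply: veq_sym; apply: veq_trans (translate_subst _ _ G1 G2) _.
rewrite /comp_interp; apply: veq_subst; first exact: veq_refl.
move=> i; rewrite (tup_ext_map _ _ (translate g)) /tup_ext.
case: insubP => [j _ _|_] /=; [exact: veq_sym | exact: veq_refl].
Qed.

Section Surj.
Variables (s s' : signature) (V : variety s) (W : variety s') (h : Cl V -> Cl W).
Hypothesis He : forall i, h (ca_e (Cl V) i) = ca_e (Cl W) i.
Hypothesis Hq : forall n (x : Cl V) (y : 'I_n -> Cl V),
  h (ca_q (Cl V) n x y) = ca_q (Cl W) n (h x) (fun i => h (y i)).

Definition Tm (o : s) : term s' := rep (h (cls V (App o (fun j => Var j)))).

Lemma claim o z : h (cls V (App o (fun j => Var j))) =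
     cls W (subst (fun i => Var (if i < arity o then i else z)) (Tm o)).
Proof.
rewrite /Tm; set c := cls V _.
pose t := rep (h c); have Ht : h c = cls W t by rewrite cls_rep.
rewrite -/t; clearbody t.
pose n := arity o; pose N := bound t + n.
have E1 : c = ca_q (Cl V) N c (fun i : 'I_N => cls V (Var (if i < n then nat_of_ord i else z))).
  rewrite /c q_cls /=; congr (cls V (App o _)); apply: functional_extensionality => j.
  have Hj : j < N by apply: leq_trans (ltn_ord j) (leq_addl _ _).
  by rewrite (tup_ext_lt _ _ (Ordinal Hj)) /= ltn_ord.
rewrite {1}E1 Hq.
have -> : (fun i : 'I_N => h (cls V (Var (if i < n then nat_of_ord i else z))))
   = (fun i : 'I_N => cls W (Var (if i < n then nat_of_ord i else z))).
  by apply: functional_extensionality => i; exact: He.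
rewrite Ht q_cls; congr (cls W _).
apply: (subst_agree (vars_below_mono (leq_addr n _) (vars_bound t))) => i Hi.
by rewrite (tup_ext_lt _ _ (Ordinal Hi)).
Qed.

Definition fS (o : s) : term s' := subst (fun i => Var (if i < arity o then i else 0)) (Tm o).

Lemma key t : h (cls V t) = cls W (translate fS t).
Proof.
elim: t => [i|o ts IH]; first exact: He.
have E2 : cls V (App o ts) =
    ca_q (Cl V) (arity o) (cls V (App o (fun j => Var j))) (fun j => cls V (ts j)).
  rewrite q_cls /=; congr (cls V (App o _)); apply: functional_extensionality => j.
  by rewrite tup_ext_lt.
rewrite E2 Hq (claim o 0).
have -> : (fun j => h (cls V (ts j))) = fun j => cls W (translate fS (ts j)).
  by apply: functional_extensionality => j; exact: IH.
by rewrite q_cls.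
Qed.

Lemma fS_interp : is_interp V W fS.
Proof.
have H1 : icond1 fS.
  move=> o Ho; apply: vars_below_subst => i /=; by case: ifP.
have H2 : icond2 W fS.
  move=> o Ho; split.
    apply: vars_below_subst => i /=; by rewrite Ho ltn0.
  have := claim o 1; rewrite (claim o 0) => /cls_eq E.
  rewrite /fS in E *; apply: veq_trans E _.
  rewrite subst_comp; rewrite (@subst_ext _ _ (fun i => Var (if i < arity o then i else 1))).
    exact: veq_refl.
  by move=> i /=; rewrite Ho ltn0.
split => // A HA; case: (vclass_variety V) => E HE; apply/HE => t u Etu v.
have Hv : veq V t u by move=> B HB; move/HE: HB; apply.
have := key u; rewrite -(proj2 (cls_eq V t u) Hv) key => /cls_eq Hw.
rewrite -!(eval_translate H1 H2 HA); exact: Hw A HA v.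
Qed.

Lemma Phi_fS : Phi s s' V W fS = h.
Proof. apply: functional_extensionality => c; by rewrite /Phi -key cls_rep. Qed.

End Surj.

Lemma Phi_surj (s s' : signature) (V : variety s) (W : variety s') (h : Cl V -> Cl W) :
  is_pure_hom h -> exists f, is_interp V W f /\ Phi s s' V W f = h.
Proof.
case=> He Hq; exists (fS h); split; [exact: fS_interp | exact: Phi_fS].
Qed.

Section P2.
Variables (s : signature) (C : clone_algebra s).
Hypotheses (HC : clone_axioms C) (HM : minimal C).

Lemma q_eval n t y :
  ca_q C n (eval C (ca_e C) t) y = eval C (tup_ext y (ca_e C)) t.
Proof.
case: HC => C1 [C2 [C3 [C4 [C5 C6]]]].
elim: t => [i|o ts IH] /=.
- case: (ltnP i n) => Hi.
  + rewrite (tup_ext_lt _ _ (Ordinal Hi)); exact: (C1 n (Ordinal Hi) y).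
  + by rewrite C2 // tup_ext_ge.
- rewrite C6; congr (interp C o _); apply: functional_extensionality => j; exact: IH.
Qed.

Lemma ex_term x : exists t, eval C (ca_e C) t = x.
Proof.
move: x; apply: HM => [i|o xs H]; first by exists (Var i).
exists (App o (fun j => proj1_sig (constructive_indefinite_description _ (H j)))) => /=.
congr (interp C o _); apply: functional_extensionality => j.
by case: constructive_indefinite_description.
Qed.

Lemma sat_of_eval t u : eval C (ca_e C) t = eval C (ca_e C) u -> satisfies C t u.
Proof.
move=> E v; pose n := bound t + bound u.
have Hag : forall i, i < n -> v i = tup_ext (fun j : 'I_n => v j) (ca_e C) i.
  by move=> i Hi; rewrite (tup_ext_lt _ _ (Ordinal Hi)).
rewrite (eval_agree (vars_below_mono (leq_addr _ _) (vars_bound t)) Hag).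
rewrite (eval_agree (vars_below_mono (leq_addl _ _) (vars_bound u)) Hag).
by rewrite -!q_eval E.
Qed.

Lemma veqC t u : veq (VarOf C) t u <-> satisfies C t u.
Proof.
split; first by move=> H; apply: H => t' u' H'.
by move=> H A HA; exact: HA t u H.
Qed.

Definition hC (x : C) : Cl (VarOf C) :=
  cls (VarOf C) (proj1_sig (constructive_indefinite_description _ (ex_term x))).

Lemma hspec t x : eval C (ca_e C) t = x -> hC x = cls (VarOf C) t.
Proof.
move=> E; rewrite /hC; case: constructive_indefinite_description => t0 /= Ht0.
apply/cls_eq/veqC; apply: sat_of_eval; by rewrite Ht0 E.
Qed.

Lemma eval_rep t : eval C (ca_e C) (rep (cls (VarOf C) t)) = eval C (ca_e C) t.
Proof. have := @rep_cls _ (VarOf C) t; move/veqC; exact. Qed.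

Lemma hg x : eval C (ca_e C) (rep (hC x)) = x.
Proof. have [t Ht] := ex_term x; by rewrite (hspec Ht) eval_rep. Qed.

Lemma part2 : exists h, clone_iso (C := C) (D := Cl (VarOf C)) h.
Proof.
exists hC; split.
- exists (fun c : Cl (VarOf C) => eval C (ca_e C) (rep c)) => [x|c]; first exact: hg.
  by rewrite (@hspec (rep c) _ erefl) cls_rep.
- move=> o xs; apply: hspec => /=; congr (interp C o _).
  apply: functional_extensionality => j; exact: hg.
- split; first by move=> i; apply: hspec.
  move=> n x y; apply: hspec => /=; rewrite eval_subst.
  rewrite (@eval_ext _ _ _ (tup_ext y (ca_e C))); first by rewrite -q_eval hg.
  move=> i; rewrite (tup_ext_map _ _ (eval C (ca_e C))) /tup_ext.
  by case: insubP => [j _ _|_] //=; rewrite hg.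
Qed.
End P2.

Theorem theorem11p14 :
  (* object part, V |-> Cl(V) *)
  (forall (s : signature) (V : variety s),
      clone_axioms (Cl V) /\ minimal (Cl V) /\
      (forall A : algebra s, VarOf (Cl V) A <-> V A))
  /\
  (* object part, C |-> Var(C_tau) *)
  (forall (s : signature) (C : clone_algebra s),
      clone_axioms C -> minimal C -> exists h, clone_iso (C := C) (D := Cl (VarOf C)) h)
  /\
  (* arrow part: a functorial bijection Hom_VAR(V,W) ~ pure homs Cl(V) -> Cl(W) *)
  (exists Phi : forall (s s' : signature) (V : variety s) (W : variety s'),
                  (forall o : s, term s') -> Cl V -> Cl W,
     [/\ forall s s' (V : variety s) (W : variety s') f,
           is_interp V W f -> is_pure_hom (Phi s s' V W f),
         forall s s' (V : variety s) (W : variety s') f g,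
           is_interp V W f -> is_interp V W g ->
           (Phi s s' V W f = Phi s s' V W g <-> interp_equiv W f g),
         forall s s' (V : variety s) (W : variety s') (h : Cl V -> Cl W),
           is_pure_hom h -> exists f, is_interp V W f /\ Phi s s' V W f = h,
         forall s (V : variety s), Phi s s V V (@id_interp s) = id
       & forall s s' s'' (V : variety s) (W : variety s') (U : variety s'') f g,
           is_interp V W f -> is_interp W U g ->
           Phi s s'' V U (comp_interp g f) = Phi s' s'' W U g \o Phi s s' V W f]).
Proof.
split; first by move=> s V; exact: part1.
split; first by move=> s C HC HM; exact: part2.
exists Phi; split.
- move=> s s' V W f; exact: Phi_pure.
- move=> s s' V W f g; exact: Phi_inj.
- move=> s s' V W h; exact: Phi_surj.
- move=> s V; exact: Phi_id.
- move=> s s' s'' V W U f g; exact: Phi_comp.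
Qed.
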